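(* Let $\Lambda,\Theta$ be Young functions with $\Lambda<\Theta$, and let $h\in L^1(\mathbb{R}^N)\cap L^\infty(\mathbb{R}^N)$. Then there exists $C=C(\Lambda,\Theta,\|h\|_1,\|h\|_\infty)>0$ such that $\|hu\|_\Lambda\le C\|u\|_\Theta$ for all $u\in L^\Theta(\mathbb{R}^N)$.
   Context: A Young function is a convex $\Lambda:[0,\infty)\to[0,\infty)$ with $\Lambda(t)=0$ iff $t=0$, $\lim_{t\to0^+}\Lambda(t)/t=0$ and $\lim_{t\to\infty}\Lambda(t)/t=\infty$. $\Lambda<\Theta$ means there exist $c,T>0$ with $\Lambda(t)\le\Theta(ct)$ for all $t\ge T$. $\|\cdot\|_\Lambda$ is the Luxemburg norm $\|u\|_\Lambda=\inf\{\tau>0:\int_{\mathbb{R}^N}\Lambda(|u|/\tau)\,dx\le1\}$ and $L^\Lambda(\mathbb{R}^N)$ the corresponding Orlicz space. *)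

(* Defs.v *)
From HB Require Import structures.
From mathcomp Require Import all_boot all_order all_algebra.
From mathcomp Require Import all_classical all_reals all_analysis.
Set Implicit Arguments. Unset Strict Implicit. Unset Printing Implicit Defensive.
Import Order.TTheory GRing.Theory Num.Theory.
Import numFieldNormedType.Exports.
Local Open Scope classical_set_scope.
Local Open Scope ring_scope.

(* R^N is modelled as N.-tuple R, with its library measurable structure
   (the product Borel sigma-algebra, generated by the coordinate maps). *)

(* mu is (the) Lebesgue measure on R^N: it gives every closed box its volume.
   Such a measure exists and, by the pi-lambda theorem, is unique on the
   product Borel sigma-algebra. *)
Definition is_lebesgue_measureN (R : realType) (N : nat)
  (mu : {measure set (N.-tuple R) -> \bar R}) : Prop :=
  forall a b : 'I_N -> R, (forall i, a i <= b i) ->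
    mu [set x | forall i, a i <= tnth x i <= b i] = (\prod_(i < N) (b i - a i))%:E.

(* Young function (only its restriction to [0, oo) is relevant). *)
Definition young (R : realType) (L : R -> R) : Prop :=
  [/\ (forall x y l : R, 0 <= x -> 0 <= y -> 0 <= l <= 1 ->
        L (l * x + (1 - l) * y) <= l * L x + (1 - l) * L y),
      (forall t : R, 0 <= t -> 0 <= L t),
      (forall t : R, 0 <= t -> (L t = 0 <-> t = 0)),
      (fun t => L t / t) @ 0^'+ --> 0
    & (fun t => L t / t) @ +oo --> +oo].

Definition young_lt (R : realType) (L T : R -> R) : Prop :=
  exists c TT : R, [/\ 0 < c, 0 < TT & forall t, TT <= t -> L t <= T (c * t)].

Definition modular (R : realType) (N : nat)
  (mu : {measure set (N.-tuple R) -> \bar R}) (L : R -> R)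
  (u : N.-tuple R -> R) (tau : R) : \bar R :=
  (\int[mu]_x (L (`|u x| / tau))%:E)%E.

(* Luxemburg norm, valued in the extended reals (+oo if the set is empty). *)
Definition luxemburg (R : realType) (N : nat)
  (mu : {measure set (N.-tuple R) -> \bar R}) (L : R -> R)
  (u : N.-tuple R -> R) : \bar R :=
  ereal_inf [set tau%:E | tau in [set tau : R | 0 < tau /\ (modular mu L u tau <= 1)%E]].

Definition orlicz (R : realType) (N : nat)
  (mu : {measure set (N.-tuple R) -> \bar R}) (L : R -> R)
  (u : N.-tuple R -> R) : Prop :=
  measurable_fun [set: N.-tuple R] u /\
  exists tau : R, 0 < tau /\ (modular mu L u tau <= 1)%E.

Definition L1_Linf (R : realType) (N : nat)
  (mu : {measure set (N.-tuple R) -> \bar R}) (h : N.-tuple R -> R) : Prop :=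
  [/\ measurable_fun [set: N.-tuple R] h,
      (Lnorm mu 1 (EFin \o h) < +oo)%E
    & (Lnorm mu +oo (EFin \o h) < +oo)%E].

(* Main.v *)
Require Import Defs.
From HB Require Import structures.
From mathcomp Require Import all_boot all_order all_algebra.
From mathcomp Require Import all_classical all_reals all_analysis.
From mathcomp Require Import measurable_realfun ess_sup_inf.
From mathcomp Require Import ring lra.
Import Order.TTheory GRing.Theory Num.Theory.
Import numFieldNormedType.Exports.
Local Open Scope classical_set_scope.
Local Open Scope ring_scope.
Set Implicit Arguments. Unset Strict Implicit.

Section Y.
Variables (R : realType) (L : R -> R) (yL : young L).

Lemma y0 : L 0 = 0.
Proof. by case: yL => _ _ h _ _; apply/h. Qed.

Lemma yge0 (t : R) : 0 <= t -> 0 <= L t.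
Proof. by case: yL => _ h _ _ _; apply: h. Qed.

Lemma yscale (l y : R) : 0 <= l <= 1 -> 0 <= y -> L (l * y) <= l * L y.
Proof.
move=> hl y0'; case: yL => cv _ _ _ _.
have := cv y 0 l y0' (lexx 0) hl.
by rewrite !mulr0 addr0 y0 mulr0 addr0.
Qed.

Lemma ymono (x y : R) : 0 <= x -> x <= y -> L x <= L y.
Proof.
move=> x0 xy; have y0' : 0 <= y by apply: le_trans xy.
have [y0e|yn0] := eqVneq y 0.
  have -> : x = y by apply/le_anti; rewrite xy y0e x0.
  by [].
have ypos : 0 < y by rewrite lt_def yn0 y0'.
have -> : x = (x / y) * y by rewrite divfK.
have hl : 0 <= x / y <= 1 by rewrite divr_ge0 //= ler_pdivrMr // mul1r.
apply: le_trans (yscale hl y0') _.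
rewrite -[leRHS]mul1r ler_wpM2r //; [exact: yge0 | by case/andP: hl].
Qed.

Lemma ylin (T0 t : R) : 0 < T0 -> 0 <= t <= T0 -> L t <= (L T0 / T0) * t.
Proof.
move=> T0p /andP[t0 tT].
have -> : t = (t / T0) * T0 by rewrite divfK // gt_eqF.
have T0ge := ltW T0p. have hl : 0 <= t / T0 <= 1 by rewrite divr_ge0 //= ler_pdivrMr // mul1r.
apply: le_trans (yscale hl (ltW T0p)) _.
rewrite [in leRHS]divfK ?gt_eqF //. have -> : t / T0 * L T0 = L T0 / T0 * t by ring. by [].
Qed.

Lemma ylarge : exists S0, 0 < S0 /\ forall s, 0 <= s -> s <= S0 + L s.
Proof.
case: yL => _ _ _ _ /cvgryPge /(_ 1) HM.
have [M [Mr HM']] := HM.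
exists (Num.max 1 (M + 1)); split; first by rewrite lt_max ltr01.
move=> s s0.
have [sS|Ss] := leP s (Num.max 1 (M + 1)).
  by rewrite ler_wpDr // yge0.
have sp : 0 < s by apply: lt_trans Ss; rewrite lt_max ltr01.
have : 1 <= L s / s.
  apply: HM'; apply: lt_trans Ss; rewrite lt_max; apply/orP; right; rewrite ltrDl ltr01 //.
rewrite ler_pdivlMr // mul1r => h; apply: le_trans h _; apply: ler_wpDl => //; rewrite le_max ler01 //.
Qed.
End Y.

Lemma ptw (R : realType) (L T : R -> R) (c TT S0 B C0 y s : R) :
  young L -> young T -> 0 < c -> 0 < TT ->
  (forall t, TT <= t -> L t <= T (c * t)) ->
  (forall s, 0 <= s -> s <= S0 + T s) ->
  0 <= y -> y <= B -> 0 <= s -> 0 < C0 -> c * B <= C0 ->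
  L (y * s / C0) <= (L TT / TT * S0 / C0) * y + ((L TT / TT) * B + c * B) / C0 * T s.
Proof.
move=> yL yT c0 TT0 hLT hS0 y0' yB s0 C00 cB.
set D := L TT / TT.
have D0 : 0 <= D by apply: divr_ge0; [exact: (yge0 yL (ltW TT0)) | exact: ltW].
set t := y * s / C0.
have t0 : 0 <= t by apply: divr_ge0; [exact: mulr_ge0 | exact: ltW].
have Ts0 : 0 <= T s by apply: (yge0 yT).
have hT : T (c * t) <= (c * B / C0) * T s.
  have -> : c * t = (c * y / C0) * s by rewrite /t; ring.
  have hl : 0 <= c * y / C0 <= 1.
    apply/andP; split.
      by apply: divr_ge0; [exact: mulr_ge0 (ltW c0) y0' | exact: ltW].
    rewrite ler_pdivrMr // mul1r.
    apply: (le_trans _ cB); by rewrite ler_wpM2l // ltW.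
  apply: le_trans (yscale yT hl s0) _.
  rewrite ler_wpM2r // ler_wpM2r ?invr_ge0 ?(ltW C00) // ler_wpM2l ?(ltW c0) //.
have hL : L t <= D * t + T (c * t).
  have [tT|Tt] := leP t TT.
    apply: le_trans (ylin yL TT0 _) _; first by rewrite t0 tT.
    by rewrite -[leLHS]addr0 lerD2l (yge0 yT) // mulr_ge0 // ltW.
  apply: le_trans (hLT _ (ltW Tt)) _.
  by rewrite -[leLHS]add0r lerD2r mulr_ge0.
have hys : y * s <= y * S0 + B * T s.
  apply: le_trans (_ : y * (S0 + T s) <= _).
    by rewrite ler_wpM2l // hS0.
  by rewrite mulrDr lerD2l ler_wpM2r.
have hD : D * t <= D * S0 / C0 * y + D * B / C0 * T s.
  have -> : D * t = D / C0 * (y * s) by rewrite /t; ring.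
  have -> : D * S0 / C0 * y + D * B / C0 * T s = D / C0 * (y * S0 + B * T s) by ring.
  by rewrite ler_wpM2l // divr_ge0 // ltW.
apply: le_trans hL _.
have -> : D * S0 / C0 * y + (D * B + c * B) / C0 * T s =
   (D * S0 / C0 * y + D * B / C0 * T s) + c * B / C0 * T s by ring.
exact: lerD.
Qed.

Lemma young_meas (R : realType) d (X : measurableType d) (L : R -> R)
  (g : X -> R) (tau : R) :
  young L -> 0 <= tau -> measurable_fun setT g ->
  measurable_fun setT (fun x => (L (`|g x| / tau))%:E).
Proof.
move=> yL tau0 mg; apply/measurable_EFinP.
pose Lp t := L (Num.max t 0).
have ndLp : nondecreasing_fun Lp.
  move=> x y xy; rewrite /Lp; apply: (ymono yL).
    by rewrite le_max lexx orbT.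
  by rewrite ge_max !le_max xy lexx !orbT.
have -> : (fun x => L (`|g x| / tau)) = Lp \o (fun x => `|g x| * tau^-1).
  apply/funext => x; rewrite /Lp /= max_l //.
  by rewrite mulr_ge0 // invr_ge0.
apply: measurableT_comp; first exact: nondecreasing_measurable.
apply: measurable_funM => //.
exact: measurableT_comp (@normr_measurable R setT) mg.
Qed.

Lemma ae_bound (R : realType) (N : nat)
  (mu : {measure set (N.-tuple R) -> \bar R}) (h : N.-tuple R -> R) :
  (Lnorm mu +oo (EFin \o h) < +oo)%E ->
  \forall x \ae mu, `|h x| <= `|fine (Lnorm mu +oo (EFin \o h))|.
Proof.
move=> hinf.
have [mu0|mu0] := ltP 0%E (mu setT).
  have := ess_sup_ge mu (abse \o (EFin \o h)).
  apply: filterS => x /= hx.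
  move: hinf; rewrite Lnorm.unlock /= mu0.
  move: hx; case: (ess_sup mu (abse \o (EFin \o h))) => [r| |] //=.
  - rewrite lee_fin => hr _; apply: le_trans hr (ler_norm _).
exists setT; split => //.
by apply/le_anti; rewrite mu0 measure_ge0.
Qed.

Theorem proposition2p15 (R : realType) (N : nat)
  (mu : {measure set (N.-tuple R) -> \bar R}) (L T : R -> R) :
  is_lebesgue_measureN mu -> young L -> young T -> young_lt L T ->
  exists C : R -> R -> R,
    forall h : N.-tuple R -> R, L1_Linf mu h ->
      let C0 := C (fine (Lnorm mu 1 (EFin \o h))) (fine (Lnorm mu +oo (EFin \o h))) in
      0 < C0 /\
      forall u : N.-tuple R -> R, orlicz mu T u ->
        (luxemburg mu L (fun x => (h x * u x)%R) <= C0%:E * luxemburg mu T u)%E.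
Proof.
move=> leb yL yT [c [TT [c0 TT0 hLT]]].
have [S0 [S00 hS0]] := ylarge yT.
set D := L TT / TT.
have D0 : 0 <= D by apply: divr_ge0; [exact: (yge0 yL (ltW TT0)) | exact: ltW].
exists (fun a b => D * (S0 * `|a| + `|b|) + c * `|b| + 1).
move=> h [mh h1 hinf] C0.
set a := fine (Lnorm mu 1 (EFin \o h)) in C0 *.
set b := fine (Lnorm mu +oo (EFin \o h)) in C0 *.
have P0 : 0 <= D * (S0 * `|a| + `|b|) by rewrite mulr_ge0 // addr_ge0 // mulr_ge0 // ltW.
have cb0 : 0 <= c * `|b| by rewrite mulr_ge0 // ltW.
have C0p : 0 < C0 by rewrite /C0; lra.
have cB : c * `|b| <= C0 by rewrite /C0; lra.
have ha : (\int[mu]_x (`|h x|)%:E = a%:E)%E.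
  have e1 : (\int[mu]_x (`|h x|)%:E = Lnorm mu 1 (EFin \o h))%E.
    by rewrite Lnorm1; apply: eq_integral => x _; rewrite abse_EFin.
  by rewrite e1 /a fineK // ge0_fin_numE // Lnorm_ge0.
split => // u [mu_ [tau0 [tau0p htau0]]].
have key : forall tau, 0 < tau -> (modular mu T u tau <= 1)%E ->
    (modular mu L (fun x => (h x * u x)%R) (C0 * tau)%R <= 1)%E.
  move=> tau taup hm; rewrite /modular.
  have taug := ltW taup. have C0g := ltW C0p.
  set al := D * S0 / C0.
  set be := (D * `|b| + c * `|b|) / C0.
  have al0 : 0 <= al by apply: divr_ge0; [exact: mulr_ge0 D0 (ltW S00) | exact: ltW C0p].
  have be0 : 0 <= be by apply: divr_ge0; [rewrite addr_ge0 // mulr_ge0 | exact: ltW C0p].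
  have mT : measurable_fun setT (fun x => (T (`|u x| / tau))%:E).
    exact: young_meas yT (ltW taup) mu_.
  have mT' := (measurable_EFinP _ _).1 mT.
  have mhabs : measurable_fun setT (fun x => `|h x|).
    exact: measurableT_comp (@normr_measurable R setT) mh.
  have T0 x : 0 <= T (`|u x| / tau) by apply: (yge0 yT); rewrite divr_ge0 // ltW.
  apply: (@le_trans _ _ (\int[mu]_x ((al * `|h x|)%:E + (be * T (`|u x| / tau))%:E))%E).
    apply: ae_ge0_le_integral => //.
    - move=> x _; rewrite lee_fin; apply: (yge0 yL); rewrite divr_ge0 // mulr_ge0 //.
    - have hC : 0 <= C0 * tau by rewrite mulr_ge0 //.
      have := (young_meas yL hC (measurable_funM mh mu_)). by [].
    - by move=> x _; rewrite adde_ge0 // lee_fin mulr_ge0 //.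
    - apply: emeasurable_funD; apply/measurable_EFinP; apply: measurable_funM => //.
    - apply: filterS (ae_bound hinf) => x hx _.
      rewrite -EFinD lee_fin.
      have -> : `|h x * u x| / (C0 * tau) = `|h x| * (`|u x| / tau) / C0.
        rewrite normrM; field; rewrite gt_eqF //= gt_eqF //.
      apply: ptw yL yT c0 TT0 hLT hS0 _ hx _ C0p cB => //.
      by rewrite divr_ge0 // ltW.
  rewrite ge0_integralD //; last 4 first.
  - by move=> x _; rewrite lee_fin mulr_ge0.
  - by apply/measurable_EFinP; apply: measurable_funM.
  - by move=> x _; rewrite lee_fin mulr_ge0.
  - by apply/measurable_EFinP; apply: measurable_funM.
  have I1 : (\int[mu]_x (al * `|h x|)%:E = al%:E * \int[mu]_x (`|h x|)%:E)%E.
    under eq_integral do rewrite EFinM.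
    by apply: ge0_integralZl_EFin => //; apply/measurable_EFinP.
  have I2 : (\int[mu]_x (be * T (`|u x| / tau))%:E = be%:E * \int[mu]_x (T (`|u x| / tau))%:E)%E.
    under eq_integral do rewrite EFinM.
    by apply: ge0_integralZl_EFin => // x _; rewrite lee_fin.
  rewrite I1 I2.
  rewrite ha.
  apply: (@le_trans _ _ (al%:E * a%:E + be%:E * 1)%E).
    by rewrite leeD2l // lee_wpmul2l // lee_fin.
  rewrite -EFinM -EFinD mulr1 lee_fin /al /be.
  have -> : D * S0 / C0 * a + (D * `|b| + c * `|b|) / C0 =
      (D * S0 * a + D * `|b| + c * `|b|) / C0.
    by field; rewrite gt_eqF.
  rewrite ler_pdivrMr // mul1r.
  have : D * S0 * a <= D * S0 * `|a| by apply: ler_wpM2l; [exact: mulr_ge0 D0 (ltW S00) | exact: ler_norm].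
  rewrite /C0; lra.
rewrite /luxemburg -lee_pdivrMl //.
apply/ereal_infP => _ [tau [taup hm] <-].
rewrite lee_pdivrMl // -EFinM.
apply: ereal_inf_lbound; exists (C0 * tau) => //.
by split; [exact: mulr_gt0 | exact: key].
Qed.
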